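(* For any sequence of groups $(G_n)_{n\in\mathbb N}$, the archipelago group $\mathcal A(G_n)$ is torsion-free.
   Context: For a sequence of groups $(G_n)_{n\in\mathbb N}$, an infinite word is a map $w:L\to\bigsqcup_n (G_n\setminus\{1\})$ from a countable linearly ordered set $L$ such that $w^{-1}(G_n)$ is finite for every $n$. Two infinite words are equivalent if for every $m$ their restrictions to the letters from $G_1,\dots,G_m$ represent the same element of $G_1*\cdots*G_m$. The topologist's product $\circledast_n G_n$ is the group of equivalence classes, with multiplication induced by concatenation and inversion by reversing the order and inverting each letter. The free product $*_n G_n$ is the subgroup of classes of finite words. The archipelago group is $\mathcal A(G_n):=\circledast_n G_n/\langle\langle *_n G_n\rangle\rangle$ (quotient by the normal closure). *)

(* Defs.v *)
From Stdlib Require Import List Relations Sorted PeanoNat Lia.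
Import ListNotations.
Set Implicit Arguments.

Record group := Group {
  gcar :> Type;
  gmul : gcar -> gcar -> gcar;
  ginv : gcar -> gcar;
  gone : gcar;
  gmulA : forall x y z, gmul x (gmul y z) = gmul (gmul x y) z;
  gmul1l : forall x, gmul gone x = x;
  gmulVl : forall x, gmul (ginv x) x = gone }.
Arguments gmul {_}. Arguments ginv {_}. Arguments gmulA {_}. Arguments gmul1l {_}. Arguments gmulVl {_}.

Lemma ginv_eq1 (H : group) (g : H) : ginv g = gone H -> g = gone H.
Proof. intro e. rewrite <- (gmul1l g). rewrite <- e at 1. apply gmulVl. Qed.

Section Archipelago.
Variable G : nat -> group.

Definition letter := {n : nat & gcar (G n)}.

(* ---- Free product of G_0,...,G_{m-1} : finite words modulo the standard
   relations (delete an identity letter, merge two adjacent letters of the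
   same factor).  [fp_eq m u v] : u and v represent the same element of
   G_0 * ... * G_{m-1}. *)
Inductive fp_step (m : nat) : list letter -> list letter -> Prop :=
| fp_del : forall u v n, n < m ->
    fp_step m (u ++ existT _ n (gone (G n)) :: v) (u ++ v)
| fp_merge : forall u v n (g h : G n),
    fp_step m (u ++ existT _ n g :: existT _ n h :: v)
              (u ++ existT _ n (gmul g h) :: v).

Definition fp_eq (m : nat) : relation (list letter) :=
  clos_refl_sym_trans _ (fp_step m).

(* ---- Infinite words: a countable linearly ordered set L and a map
   L -> disjoint union of the G_n \ {1}, with finite preimage of each G_n. *)
Record iword := IWord {
  wL : Type;
  wlt : wL -> wL -> Prop;
  wlt_irr : forall i, ~ wlt i i;
  wlt_trans : forall i j k, wlt i j -> wlt j k -> wlt i k;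
  wlt_total : forall i j, wlt i j \/ i = j \/ wlt j i;
  wcount : exists f : wL -> nat, forall i j, f i = f j -> i = j;
  wlet : wL -> letter;
  wnontriv : forall i, projT2 (wlet i) <> gone (G (projT1 (wlet i)));
  wfin : forall n, exists l : list wL, forall i, projT1 (wlet i) = n -> In i l }.

Arguments wlt_irr {_}. Arguments wlt_trans {_}. Arguments wlt_total {_}. Arguments wnontriv {_}.

Definition restr (w : iword) (m : nat) (l : list (wL w)) : Prop :=
  StronglySorted (@wlt w) l /\
  (forall i, In i l <-> projT1 (wlet w i) < m).

Definition word_eq (w1 w2 : iword) : Prop :=
  forall m l1 l2, restr w1 m l1 -> restr w2 m l2 ->
    fp_eq m (map (wlet w1) l1) (map (wlet w2) l2).

Definition is_finite_word (w : iword) : Prop :=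
  exists l : list (wL w), forall i, In i l.

Definition sumlt (A B : Type) (ra : A -> A -> Prop) (rb : B -> B -> Prop)
  (x y : A + B) : Prop :=
  match x, y with
  | inl a, inl a' => ra a a'
  | inl _, inr _ => True
  | inr _, inl _ => False
  | inr b, inr b' => rb b b'
  end.

Definition sumlet (w1 w2 : iword) (x : wL w1 + wL w2) : letter :=
  match x with inl a => wlet w1 a | inr b => wlet w2 b end.

Lemma concat_irr (w1 w2 : iword) :
  forall i, ~ sumlt (@wlt w1) (@wlt w2) i i.
Proof. intros [a|b]; simpl; apply wlt_irr. Qed.

Lemma concat_trans (w1 w2 : iword) : forall i j k,
  sumlt (@wlt w1) (@wlt w2) i j -> sumlt (@wlt w1) (@wlt w2) j k ->
  sumlt (@wlt w1) (@wlt w2) i k.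
Proof.
  intros [a|a] [b|b] [c|c]; simpl; try tauto; apply wlt_trans.
Qed.

Lemma concat_total (w1 w2 : iword) : forall i j,
  sumlt (@wlt w1) (@wlt w2) i j \/ i = j \/ sumlt (@wlt w1) (@wlt w2) j i.
Proof.
  intros [a|a] [b|b]; simpl; auto.
  - destruct (wlt_total a b) as [h|[h|h]]; subst; auto.
  - destruct (wlt_total a b) as [h|[h|h]]; subst; auto.
Qed.

Lemma concat_count (w1 w2 : iword) :
  exists f : wL w1 + wL w2 -> nat, forall i j, f i = f j -> i = j.
Proof.
  destruct (wcount w1) as [f1 h1]; destruct (wcount w2) as [f2 h2].
  exists (fun x => match x with inl a => 2 * f1 a | inr b => S (2 * f2 b) end).
  intros [a|a] [b|b] e.
  - f_equal; apply h1; lia.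
  - exfalso; lia.
  - exfalso; lia.
  - f_equal; apply h2; lia.
Qed.

Lemma concat_nontriv (w1 w2 : iword) : forall i,
  projT2 (sumlet w1 w2 i) <> gone (G (projT1 (sumlet w1 w2 i))).
Proof. intros [a|b]; simpl; apply wnontriv. Qed.

Lemma concat_fin (w1 w2 : iword) : forall n, exists l : list (wL w1 + wL w2),
  forall i, projT1 (sumlet w1 w2 i) = n -> In i l.
Proof.
  intro n. destruct (wfin w1 n) as [l1 h1]; destruct (wfin w2 n) as [l2 h2].
  exists (map inl l1 ++ map inr l2). intros [a|b] e; simpl in e;
  apply in_or_app; [left|right]; apply in_map; auto.
Qed.

Definition concat (w1 w2 : iword) : iword :=
  @IWord (wL w1 + wL w2) (sumlt (@wlt w1) (@wlt w2))
    (@concat_irr w1 w2) (@concat_trans w1 w2) (@concat_total w1 w2)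
    (concat_count w1 w2) (sumlet w1 w2) (@concat_nontriv w1 w2)
    (@concat_fin w1 w2).

Definition invlet (x : letter) : letter :=
  existT _ (projT1 x) (ginv (projT2 x)).

Lemma inverse_nontriv (w : iword) : forall i,
  projT2 (invlet (wlet w i)) <> gone (G (projT1 (invlet (wlet w i)))).
Proof. intros i e. apply (wnontriv i). apply ginv_eq1. exact e. Qed.

Lemma inverse_total (w : iword) : forall i j : wL w,
  @wlt w j i \/ i = j \/ @wlt w i j.
Proof. intros i j. destruct (wlt_total i j) as [h|[h|h]]; auto. Qed.

Definition inverse (w : iword) : iword :=
  @IWord (wL w) (fun i j => @wlt w j i) (@wlt_irr w)
    (fun i j k h1 h2 => wlt_trans _ _ _ h2 h1) (@inverse_total w)
    (wcount w) (fun i => invlet (wlet w i)) (@inverse_nontriv w)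
    (wfin w).

(* positive powers: [wpow w k] is the word w^(k+1) *)
Fixpoint wpow (w : iword) (k : nat) : iword :=
  match k with 0 => w | S k' => concat (wpow w k') w end.

(* ---- the normal closure of the free product inside the topologist's
   product (as a set of infinite words, closed under equivalence) *)
Inductive in_ncl : iword -> Prop :=
| ncl_fin : forall w, is_finite_word w -> in_ncl w
| ncl_mul : forall a b, in_ncl a -> in_ncl b -> in_ncl (concat a b)
| ncl_inv : forall a, in_ncl a -> in_ncl (inverse a)
| ncl_conj : forall a u, in_ncl a -> in_ncl (concat (concat u a) (inverse u))
| ncl_eq : forall a b, in_ncl a -> word_eq a b -> in_ncl b.

End Archipelago.

(* Main.v *)
From Stdlib Require Import List Relations Sorted PeanoNat Lia Arith.
From Stdlib Require Import Classical ClassicalEpsilon ProofIrrelevance Eqdep_dec.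
Import ListNotations.
Require Import Defs.
Set Implicit Arguments.

Section Grp.
Variable H : group.
Lemma gmulVr (g : H) : gmul g (ginv g) = gone H.
Proof.
  rewrite <- (gmul1l (gmul g (ginv g))).
  rewrite <- (gmulVl (ginv g)) at 1.
  rewrite <- gmulA. rewrite (gmulA (ginv g)). rewrite gmulVl, gmul1l. apply gmulVl.
Qed.
Lemma gmul1r (g : H) : gmul g (gone H) = g.
Proof. rewrite <- (gmulVl g), gmulA, gmulVr. apply gmul1l. Qed.
Lemma ginvK (g : H) : ginv (ginv g) = g.
Proof.
  rewrite <- (gmul1r (ginv (ginv g))). rewrite <- (gmulVl g).
  rewrite gmulA, gmulVl. apply gmul1l.
Qed.
End Grp.

Section Free.
Variable G : nat -> group.
Notation L := (letter G).

Definition xm (P : Prop) : {P} + {~P} := excluded_middle_informative P.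

Definition cast {n n'} (e : n = n') (x : G n) : G n' := eq_rect n (fun k => gcar (G k)) x n' e.
Lemma cast_id n (e : n = n) x : cast e x = x.
Proof. unfold cast. rewrite <- (eq_rect_eq_dec Nat.eq_dec). reflexivity. Qed.

Definition triv (a : L) : Prop := projT2 a = gone (G (projT1 a)).

Definition act (a : L) (r : list L) : list L :=
  match r with
  | [] => if xm (triv a) then [] else [a]
  | b :: t =>
    match Nat.eq_dec (projT1 a) (projT1 b) with
    | left e => if xm (gmul (cast e (projT2 a)) (projT2 b) = gone _) then t
                else existT _ (projT1 b) (gmul (cast e (projT2 a)) (projT2 b)) :: t
    | right _ => if xm (triv a) then r else a :: r
    end
  end.

Fixpoint reduced (r : list L) : Prop :=
  match r with
  | [] => True
  | a :: t => ~ triv a /\ (match t with [] => True | b :: _ => projT1 a <> projT1 b end) /\ reduced t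
  end.

Lemma act_reduced a r : reduced r -> reduced (act a r).
Proof.
  destruct r as [|b t]; simpl.
  - intros _. destruct (xm (triv a)); simpl; tauto.
  - intros [h1 [h2 h3]]. destruct a as [n g], b as [n' h]; simpl in *.
    destruct (Nat.eq_dec n n') as [e|e].
    + subst n'. rewrite cast_id. destruct (xm _) as [c|c]; simpl; auto.
    + destruct (xm _); simpl; auto.
Qed.

Lemma act_merge n (g h : G n) r : reduced r ->
  act (existT _ n g) (act (existT _ n h) r) = act (existT _ n (gmul g h)) r.
Proof.
  destruct r as [|b t]; simpl.
  - intros _. unfold triv; simpl. destruct (xm (h = gone _)) as [e|e].
    + subst h. rewrite gmul1r. reflexivity.
    + simpl. destruct (Nat.eq_dec n n) as [e'|e']; [|congruence].
      rewrite cast_id. reflexivity.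
  - intros [h1 [h2 h3]]. destruct b as [n' x]; simpl in *.
    destruct (Nat.eq_dec n n') as [e|e].
    + subst n'. rewrite !cast_id.
      destruct (xm (gmul h x = gone _)) as [e1|e1].
      * destruct t as [|[n2 y] t']; simpl.
        -- unfold triv; simpl. destruct (xm (g = gone _)) as [e2|e2];
           destruct (xm (gmul (gmul g h) x = gone _)) as [e3|e3]; auto.
           ++ exfalso. apply e3. rewrite <- gmulA, e1, e2, gmul1r. reflexivity.
           ++ exfalso. apply e2. rewrite <- gmulA, e1, gmul1r in e3. exact e3.
           ++ rewrite <- gmulA, e1, gmul1r. reflexivity.
        -- destruct (Nat.eq_dec n n2) as [e2|e2]; [simpl in h2; congruence|].
           unfold triv; simpl. destruct (xm (g = gone _)) as [e4|e4];
           destruct (xm (gmul (gmul g h) x = gone _)) as [e3|e3]; auto.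
           ++ exfalso. apply e3. rewrite <- gmulA, e1, e4, gmul1r. reflexivity.
           ++ exfalso. apply e4. rewrite <- gmulA, e1, gmul1r in e3. exact e3.
           ++ rewrite <- gmulA, e1, gmul1r. reflexivity.
      * simpl. destruct (Nat.eq_dec n n) as [e'|e']; [|congruence]. rewrite cast_id.
        rewrite !gmulA. reflexivity.
    + unfold triv; simpl. destruct (xm (h = gone _)) as [e1|e1].
      * subst h. rewrite gmul1r. simpl. destruct (Nat.eq_dec n n') as [e2|e2]; [congruence|]. reflexivity.
      * simpl. destruct (Nat.eq_dec n n) as [e'|e']; [|congruence]. rewrite cast_id.
        destruct (Nat.eq_dec n n') as [e2|e2]; [congruence|].
        destruct (xm (gmul g h = gone _)); reflexivity.
Qed.

Lemma act_one n r : reduced r -> act (existT _ n (gone (G n))) r = r.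
Proof.
  destruct r as [|[n' x] t]; simpl.
  - intros _. destruct (xm _) as [e|e]; auto. exfalso; apply e; reflexivity.
  - intros [h1 _]. destruct (Nat.eq_dec n n') as [e|e].
    + subst. rewrite cast_id, gmul1l. destruct (xm _) as [e|e]; [contradiction|auto].
    + destruct (xm _) as [e1|e1]; auto. exfalso; apply e1; reflexivity.
Qed.

Definition act_word (u r : list L) := fold_right act r u.
Definition red u := act_word u [].

Lemma act_word_cons a u r : act_word (a :: u) r = act a (act_word u r).
Proof. reflexivity. Qed.
Lemma act_word_nil r : act_word [] r = r.
Proof. reflexivity. Qed.

Lemma act_word_app u v r : act_word (u ++ v) r = act_word u (act_word v r).
Proof. unfold act_word. apply fold_right_app. Qed.

Lemma act_word_reduced u r : reduced r -> reduced (act_word u r).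
Proof. induction u; simpl; auto. intros; apply act_reduced; auto. Qed.

Lemma red_reduced u : reduced (red u).
Proof. apply act_word_reduced; simpl; auto. Qed.

Lemma step_inv m u v : fp_step m u v -> forall r, reduced r -> act_word u r = act_word v r.
Proof.
  intros [u0 v0 n hn | u0 v0 n g h] r hr; rewrite !act_word_app; f_equal; simpl.
  - apply act_one, act_word_reduced, hr.
  - apply act_merge, act_word_reduced, hr.
Qed.

Lemma fp_eq_act m u v : fp_eq m u v -> forall r, reduced r -> act_word u r = act_word v r.
Proof.
  induction 1; intros r hr; eauto using step_inv.
  - symmetry; auto.
  - rewrite IHclos_refl_sym_trans1; auto.
Qed.

Lemma fp_eq_red m u v : fp_eq m u v -> red u = red v.
Proof. intro h. apply (fp_eq_act h). simpl; auto. Qed.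

Lemma act_word_reduced_id r : reduced r -> act_word r [] = r.
Proof.
  induction r as [|a t IH]; simpl; auto. intros [h1 [h2 h3]]. rewrite IH by auto.
  destruct t as [|b t']; simpl.
  - destruct (xm (triv a)); tauto.
  - destruct (Nat.eq_dec (projT1 a) (projT1 b)); [contradiction|].
    destruct (xm (triv a)); tauto.
Qed.

Lemma red_id r : reduced r -> red r = r.
Proof. apply act_word_reduced_id. Qed.

Definition bounded m (u : list L) := Forall (fun a => projT1 a < m) u.

Lemma fp_step_ctx m (p q x y : list L) : fp_step m x y -> fp_step m (p ++ x ++ q) (p ++ y ++ q).
Proof.
  intros [u0 v0 n hn | u0 v0 n g h].
  - pose proof (@fp_del G m (p ++ u0) (v0 ++ q) n hn) as H.
    rewrite <- !app_assoc in H. rewrite <- !app_assoc. exact H.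
  - pose proof (@fp_merge G m (p ++ u0) (v0 ++ q) n g h) as H.
    rewrite <- !app_assoc in H. rewrite <- !app_assoc. exact H.
Qed.

Lemma fp_eq_ctx m (p q x y : list L) : fp_eq m x y -> fp_eq m (p ++ x ++ q) (p ++ y ++ q).
Proof.
  induction 1.
  - apply rst_step, fp_step_ctx; auto.
  - apply rst_refl.
  - apply rst_sym; auto.
  - eapply rst_trans; eauto.
Qed.

Lemma act_bounded m a r : projT1 a < m -> bounded m r -> bounded m (act a r).
Proof.
  intros ha hr. destruct r as [|b t]; simpl.
  - destruct (xm _); repeat constructor; auto.
  - inversion hr; subst. destruct (Nat.eq_dec _ _).
    + destruct (xm _); auto. constructor; auto.
    + destruct (xm _); auto. constructor; auto.
Qed.

Lemma act_word_bounded m u r : bounded m u -> bounded m r -> bounded m (act_word u r).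
Proof. induction 1; simpl; auto. intros; apply act_bounded; auto. Qed.

Lemma act_fp m a r : reduced r -> projT1 a < m -> fp_eq m (a :: r) (act a r).
Proof.
  intros hr ha. destruct r as [|b t]; simpl.
  - destruct (xm (triv a)) as [e|e]; [|apply rst_refl].
    destruct a as [n g]; unfold triv in e; simpl in *; subst g.
    apply rst_step. apply (@fp_del G m [] [] n ha).
  - destruct a as [n g], b as [n' h]; simpl in *.
    destruct (Nat.eq_dec n n') as [e|e].
    + subst n'. rewrite cast_id.
      assert (h1 : fp_eq m (existT _ n g :: existT _ n h :: t) (existT _ n (gmul g h) :: t)).
      { apply rst_step. apply (@fp_merge G m [] t n g h). }
      destruct (xm _) as [e|e]; auto.
      eapply rst_trans; [exact h1|]. rewrite e.
      apply rst_step. apply (@fp_del G m [] t n ha).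
    + destruct (xm _) as [e1|e1]; [|apply rst_refl].
      unfold triv in e1; simpl in e1; subst g.
      apply rst_step. apply (@fp_del G m [] (existT _ n' h :: t) n ha).
Qed.

Lemma act_word_fp m u r : reduced r -> bounded m u -> bounded m r ->
  fp_eq m (u ++ r) (act_word u r).
Proof.
  intros hr hu hb. induction hu as [|a u ha hu IH]; simpl; [apply rst_refl|].
  eapply rst_trans.
  - pose proof (fp_eq_ctx [a] [] IH) as h. rewrite !app_nil_r in h. exact h.
  - apply act_fp; auto. apply act_word_reduced; auto.
Qed.

Lemma red_fp m u : bounded m u -> fp_eq m u (red u).
Proof.
  intro h. pose proof (act_word_fp (r:=[]) I h (Forall_nil _)) as h1.
  rewrite app_nil_r in h1. exact h1.
Qed.

Lemma red_fp_eq m u v : bounded m u -> bounded m v -> red u = red v -> fp_eq m u v.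
Proof.
  intros hu hv e. eapply rst_trans; [apply red_fp, hu|]. rewrite e. apply rst_sym, red_fp, hv.
Qed.

Lemma bounded_exists (u : list L) : exists m, bounded m u.
Proof.
  induction u as [|a u [m hm]]. { exists 0; constructor. }
  exists (S (max m (projT1 a))). constructor; [lia|].
  eapply Forall_impl; [|exact hm]. simpl; intros; lia.
Qed.

Lemma bounded_mono m m' u : m <= m' -> bounded m u -> bounded m' u.
Proof. intros hm h. eapply Forall_impl; [|exact h]. simpl; intros; lia. Qed.

Lemma bounded_app m u v : bounded m u -> bounded m v -> bounded m (u ++ v).
Proof. intros; apply Forall_app; auto. Qed.

Lemma act_word_red_eq u r : reduced r -> act_word u r = act_word (red u) r.
Proof.
  intro hr. destruct (bounded_exists (u ++ r)) as [m hm].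
  apply Forall_app in hm as [hu hrb].
  apply (fp_eq_act (red_fp hu)); auto.
Qed.

Lemma red_app u v : red (u ++ v) = act_word u (red v).
Proof. unfold red. apply act_word_app. Qed.

Lemma red_app2 u v : red (u ++ v) = red (red u ++ red v).
Proof.
  rewrite !red_app. rewrite (@red_id (red v) (red_reduced v)).
  apply act_word_red_eq, red_reduced.
Qed.

Lemma red_red u : red (red u) = red u.
Proof. apply red_id, red_reduced. Qed.

Lemma red_cong u u' v v' : red u = red u' -> red v = red v' -> red (u ++ v) = red (u' ++ v').
Proof. intros e1 e2. rewrite red_app2, e1, e2, <- red_app2. reflexivity. Qed.

Definition inv (u : list L) : list L := rev (map (@invlet G) u).

Lemma inv_app u v : inv (u ++ v) = inv v ++ inv u.
Proof. unfold inv. rewrite map_app, rev_app_distr. reflexivity. Qed.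

Lemma inv_cons a u : inv (a :: u) = inv u ++ [invlet a].
Proof. reflexivity. Qed.

Lemma act_inv_l a r : reduced r -> act (invlet a) (act a r) = r.
Proof.
  intro hr. destruct a as [n g]. unfold invlet; simpl.
  rewrite act_merge, gmulVl, act_one; auto.
Qed.

Lemma act_inv_r a r : reduced r -> act a (act (invlet a) r) = r.
Proof.
  intro hr. destruct a as [n g]. unfold invlet; simpl.
  rewrite act_merge, gmulVr, act_one; auto.
Qed.

Lemma act_word_inv_l u r : reduced r -> act_word (inv u) (act_word u r) = r.
Proof.
  induction u as [|a u IH]; intro hr; simpl; auto.
  rewrite inv_cons, act_word_app. simpl.
  rewrite act_inv_l by (apply act_word_reduced; auto). auto.
Qed.

Lemma act_word_inv_r u r : reduced r -> act_word u (act_word (inv u) r) = r.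
Proof.
  revert r; induction u as [|a u IH]; intros r hr; [reflexivity|].
  rewrite inv_cons, act_word_app, act_word_cons, act_word_cons, act_word_nil.
  rewrite IH by (apply act_reduced; auto). apply act_inv_r; auto.
Qed.

Lemma red_inv_r u : red (u ++ inv u) = [].
Proof. rewrite red_app. apply act_word_inv_r. simpl; auto. Qed.
Lemma red_inv_l u : red (inv u ++ u) = [].
Proof. rewrite red_app. apply act_word_inv_l. simpl; auto. Qed.

Lemma red_nil_l u v : red u = [] -> red (u ++ v) = red v.
Proof. intro e. rewrite red_app2, e. simpl. apply red_red. Qed.
Lemma red_nil_r u v : red v = [] -> red (u ++ v) = red u.
Proof. intro e. rewrite red_app2, e, app_nil_r. apply red_red. Qed.

Lemma red_inv_nil u : red u = [] -> red (inv u) = [].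
Proof.
  intro e. rewrite <- (red_nil_r (inv u) u e). apply red_inv_l.
Qed.

Lemma red_conj_nil c x : red x = [] -> red (c ++ x ++ inv c) = [].
Proof. intro e. rewrite red_app, (red_nil_l x (inv c) e), <- red_app. apply red_inv_r. Qed.

Lemma red_conj_cancel c x : red (c ++ x ++ inv c) = [] -> red x = [].
Proof.
  intro e.
  assert (h : red (inv c ++ (c ++ x ++ inv c) ++ c) = red x).
  { unfold red. rewrite <- !app_assoc. rewrite !act_word_app.
    rewrite (act_word_inv_l c []) by (simpl; auto).
    apply act_word_inv_l. apply act_word_reduced; simpl; auto. }
  rewrite <- h. rewrite red_app2, (red_nil_l _ _ e), <- red_app2. apply red_inv_l.
Qed.

End Free.

Section Free2.
Variable G : nat -> group.
Notation L := (letter G).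

Definition filt (p : nat -> bool) (u : list L) := filter (fun a => p (projT1 a)) u.

Lemma filt_app p (u v : list L) : filt p (u ++ v) = filt p u ++ filt p v.
Proof. apply filter_app. Qed.

Lemma filt_cons p (a : L) u : filt p (a :: u) = (if p (projT1 a) then [a] else []) ++ filt p u.
Proof. unfold filt; simpl. destruct (p (projT1 a)); reflexivity. Qed.

Lemma filt_step m p (u v : list L) : fp_step m u v -> fp_eq m (filt p u) (filt p v).
Proof.
  intros [u0 v0 n hn | u0 v0 n g h]; rewrite !filt_app, !filt_cons.
  - simpl. destruct (p n); simpl; [|apply rst_refl].
    apply rst_step. apply (@fp_del G m (filt p u0) (filt p v0) n hn).
  - simpl. destruct (p n); simpl; [|apply rst_refl].
    apply rst_step. apply (@fp_merge G m (filt p u0) (filt p v0) n g h).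
Qed.

Lemma filt_fp m p (u v : list L) : fp_eq m u v -> fp_eq m (filt p u) (filt p v).
Proof.
  induction 1; [apply filt_step; auto|apply rst_refl|apply rst_sym; auto|eapply rst_trans; eauto].
Qed.

Lemma filt_red p (u v : list L) : red u = red v -> red (filt p u) = red (filt p v).
Proof.
  intro e. destruct (bounded_exists (u ++ v)) as [m hm]. apply Forall_app in hm as [hu hv].
  eapply fp_eq_red. apply filt_fp. apply (red_fp_eq hu hv e).
Qed.

Lemma filt_red_nil p (u : list L) : red u = [] -> red (filt p u) = [].
Proof. intro e. apply (filt_red p u []) in e. exact e. Qed.

Lemma filt_inv p (u : list L) : filt p (inv u) = inv (filt p u).
Proof.
  induction u as [|a u IH]; [reflexivity|].
  rewrite inv_cons, filt_app, IH, filt_cons. unfold filt at 2; simpl.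
  destruct (p (projT1 a)); simpl; [rewrite inv_cons|]; rewrite ?app_nil_r; reflexivity.
Qed.

Lemma filt_filt p q (u : list L) : filt p (filt q u) = filt (fun n => andb (q n) (p n)) u.
Proof.
  induction u as [|a u IH]; [reflexivity|]. rewrite !filt_cons.
  destruct (q (projT1 a)) eqn:E1; simpl.
  - rewrite IH. destruct (p (projT1 a)); reflexivity.
  - exact IH.
Qed.

Lemma filt_ext p q (u : list L) : (forall n, p n = q n) -> filt p u = filt q u.
Proof. intro h. unfold filt. apply filter_ext. intro; apply h. Qed.

Lemma filt_true (u : list L) : filt (fun _ => true) u = u.
Proof. induction u; simpl; f_equal; auto. Qed.

Lemma filt_conj p (d : list L) b :
  filt p (d ++ b :: inv d) = filt p d ++ (if p (projT1 b) then [b] else []) ++ inv (filt p d).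
Proof. rewrite filt_app, filt_cons, filt_inv. reflexivity. Qed.

Fixpoint pow (u : list L) k := match k with 0 => u | S k => pow u k ++ u end.

Lemma filt_pow p (u : list L) k : filt p (pow u k) = pow (filt p u) k.
Proof. induction k; simpl; auto. rewrite filt_app, IHk. reflexivity. Qed.

Lemma red_pow_cong (u v : list L) k : red u = red v -> red (pow u k) = red (pow v k).
Proof. intro e. induction k; simpl; auto. apply red_cong; auto. Qed.

Lemma red_cancel (u c v : list L) : red (u ++ inv c ++ c ++ v) = red (u ++ v).
Proof.
  rewrite red_app, (red_app u v). f_equal. unfold red. rewrite !act_word_app.
  apply act_word_inv_l. apply act_word_reduced. simpl; auto.
Qed.

Lemma pow_conj (c y : list L) k : red (pow (c ++ y ++ inv c) k) = red (c ++ pow y k ++ inv c).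
Proof.
  induction k; [reflexivity|]. simpl.
  rewrite (red_cong (pow (c ++ y ++ inv c) k) (c ++ pow y k ++ inv c) (c ++ y ++ inv c) (c ++ y ++ inv c) IHk eq_refl).
  replace ((c ++ pow y k ++ inv c) ++ c ++ y ++ inv c) with ((c ++ pow y k) ++ inv c ++ c ++ (y ++ inv c))
    by (rewrite <- !app_assoc; reflexivity).
  rewrite red_cancel. rewrite <- !app_assoc. reflexivity.
Qed.

Lemma length_act (a : L) r : length (act a r) <= S (length r).
Proof.
  destruct r as [|b t]; simpl.
  - destruct (xm _); simpl; lia.
  - destruct (Nat.eq_dec _ _); destruct (xm _); simpl; lia.
Qed.

Lemma length_act_word (u r : list L) : length (act_word u r) <= length u + length r.
Proof.
  induction u; simpl; auto. pose proof (length_act a (act_word u r)). lia.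
Qed.

Definition cyc (y : list L) : Prop :=
  match y with
  | [] => True
  | [_] => True
  | a :: _ => exists y' z, y = y' ++ [z] /\ projT1 a <> projT1 z
  end.

Lemma cyc_red n : forall r, length r <= n -> reduced r ->
  exists c y, reduced y /\ cyc y /\ red r = red (c ++ y ++ inv c).
Proof.
  induction n as [|n IH]; intros r hl hr.
  - destruct r; [|simpl in hl; lia]. exists [], []. simpl; auto.
  - destruct r as [|a [|b t]].
    + exists [], []. simpl; auto.
    + exists [], [a]. simpl. auto.
    + destruct (@exists_last _ (b :: t)) as [s [z E]]; [discriminate|].
      destruct (Nat.eq_dec (projT1 a) (projT1 z)) as [ez|ez].
      * set (r' := red (s ++ [z; a])).
        assert (hl' : length r' <= n).
        { unfold r', red. rewrite act_word_app.
          pose proof (length_act_word s (act_word [z; a] [])) as h.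
          assert (h2 : length (act_word [z; a] []) <= 1).
          { rewrite act_word_cons, act_word_cons, act_word_nil.
            destruct hr as [ha _].
            simpl act at 2. destruct (xm (triv a)) as [e|e]; [contradiction|].
            simpl. destruct (Nat.eq_dec (projT1 z) (projT1 a)) as [e'|e']; [|congruence].
            destruct (xm _); simpl; lia. }
          assert (length (a :: b :: t) = length s + 2).
          { rewrite E. simpl. rewrite length_app. simpl. lia. }
          lia. }
        destruct (IH r' hl' (red_reduced _)) as [c' [y [hy1 [hy2 hy3]]]].
        exists (a :: c'), y. split; [auto|]. split; [auto|].
        rewrite E.
        assert (e1 : red (a :: s ++ [z]) = red ([a] ++ (s ++ [z; a]) ++ [invlet a])).
        { replace ([a] ++ (s ++ [z; a]) ++ [invlet a]) with ((a :: s ++ [z]) ++ [a; invlet a])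
            by (simpl; rewrite <- !app_assoc; reflexivity).
          rewrite (red_app (a :: s ++ [z]) [a; invlet a]).
          assert (e0 : red [a; invlet a] = []).
          { unfold red. rewrite act_word_cons, act_word_cons, act_word_nil, act_inv_r; simpl; auto. }
          rewrite e0. reflexivity. }
        rewrite e1.
        rewrite (red_cong [a] [a] ((s ++ [z; a]) ++ [invlet a]) ((c' ++ y ++ inv c') ++ [invlet a]) eq_refl).
        -- rewrite inv_cons. f_equal. rewrite <- !app_assoc. reflexivity.
        -- apply red_cong; [|reflexivity]. rewrite <- hy3. unfold r'. rewrite red_red. reflexivity.
      * exists [], (a :: b :: t). split; auto. split.
        -- simpl. exists (a :: s), z. rewrite E. simpl. auto.
        -- simpl. rewrite app_nil_r. reflexivity.
Qed.

Lemma reduced_join (u : list L) z a v : reduced (u ++ [z]) -> reduced (a :: v) ->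
  projT1 z <> projT1 a -> reduced ((u ++ [z]) ++ a :: v).
Proof.
  intros h1 h2 h3. induction u as [|b u IH].
  - simpl in *. tauto.
  - simpl in h1 |- *. destruct h1 as [hb [hbn hr]]. split; auto. split; auto.
    destruct u as [|c u']; simpl in *; auto.
Qed.

Lemma pow_last (y y' : list L) z k : y = y' ++ [z] -> exists P, pow y k = P ++ [z].
Proof.
  intro e. induction k; simpl.
  - exists y'. auto.
  - exists (pow y k ++ y'). rewrite e, app_assoc. reflexivity.
Qed.

Lemma pow_head (a : L) t k : exists Q, pow (a :: t) k = a :: Q.
Proof. induction k; simpl; eauto. destruct IHk as [Q ->]. eexists; reflexivity. Qed.

Lemma torsion (x : list L) k : red (pow x k) = [] ->
  red x = [] \/ exists c a, ~ triv a /\ red x = red (c ++ a :: inv c).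
Proof.
  intro e.
  destruct (@cyc_red (length (red x)) (red x) (le_n _) (red_reduced x)) as [c [y [hy1 [hy2 hy3]]]].
  rewrite red_red in hy3.
  assert (e2 : red (pow y k) = []).
  { apply (red_conj_cancel c). rewrite <- pow_conj. rewrite <- (red_pow_cong _ _ k hy3). exact e. }
  destruct y as [|a [|b t]].
  - left. rewrite hy3. simpl. apply red_inv_r.
  - right. exists c, a. simpl in hy1. tauto.
  - exfalso. destruct hy2 as [y' [z [E hz]]].
    assert (hred : forall k, reduced (pow (a :: b :: t) k)).
    { induction k0; simpl; auto.
      destruct (@pow_last _ _ _ k0 E) as [P hP]. rewrite hP. rewrite hP in IHk0.
      apply reduced_join; auto. }
    rewrite red_id in e2 by apply hred.
    destruct (pow_head a (b :: t) k) as [Q hQ]. rewrite hQ in e2. discriminate.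
Qed.

Lemma red_single (a : L) : red [a] = [] -> triv a.
Proof. unfold red; simpl. destruct (xm (triv a)); auto. discriminate. Qed.

Lemma stable (k : nat) (X : nat -> list L -> Prop) :
  (forall m, exists u, X m u) -> (forall m u, X m u -> red (pow u k) = []) ->
  (forall m m' u u', m <= m' -> X m u -> X m' u' -> u = filt (fun n => n <? m) u') ->
  exists M', forall m u, X m u -> red (filt (fun n => M' <=? n) u) = [].
Proof.
  intros H1 H2 H3.
  destruct (classic (forall m u, X m u -> red u = [])) as [hall|hn].
  - exists 0. intros m u hx. rewrite (filt_ext _ (fun _ => true)) by reflexivity.
    rewrite filt_true. eauto.
  - apply not_all_ex_not in hn as [m0 hn]. apply not_all_ex_not in hn as [u0 hn].
    apply imply_to_and in hn as [hx0 hn0].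
    destruct (torsion u0 k (H2 _ _ hx0)) as [h|[c [a [ha hca]]]]; [contradiction|].
    exists (S (projT1 a)). intros m u hx.
    destruct (H1 (max m m0)) as [u' hx'].
    assert (hu0 : u0 = filt (fun n => n <? m0) u') by (apply (H3 m0 (max m m0)); auto; lia).
    assert (hu : u = filt (fun n => n <? m) u') by (apply (H3 m (max m m0)); auto; lia).
    destruct (torsion u' k (H2 _ _ hx')) as [h'|[d [b [hb hdb]]]].
    { exfalso. apply hn0. rewrite hu0. apply filt_red_nil; auto. }
    assert (hu0' : red u0 = red (filt (fun n => n <? m0) (d ++ b :: inv d))).
    { rewrite hu0. apply filt_red. exact hdb. }
    rewrite filt_conj in hu0'.
    destruct (projT1 b <? m0) eqn:Eb.
    2: { exfalso. apply hn0. rewrite hu0'. simpl. apply red_inv_r. }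
    assert (eab : projT1 b = projT1 a).
    { destruct (Nat.eq_dec (projT1 b) (projT1 a)) as [e|e]; auto. exfalso.
      assert (h5 : red (filt (fun n => n =? projT1 a) (c ++ a :: inv c)) =
                   red (filt (fun n => n =? projT1 a) (filt (fun n => n <? m0) d ++ [b] ++
                        inv (filt (fun n => n <? m0) d)))).
      { apply filt_red. rewrite <- hca, hu0'. reflexivity. }
      rewrite filt_conj in h5. rewrite Nat.eqb_refl in h5.
      rewrite filt_app, filt_app, filt_cons, filt_inv in h5.
      replace (projT1 b =? projT1 a) with false in h5 by (symmetry; apply Nat.eqb_neq; auto).
      simpl in h5. rewrite red_inv_r in h5.
      apply ha. apply red_single. apply (red_conj_cancel (filt (fun n => n =? projT1 a) c)).
      exact h5. }
    rewrite hu, filt_filt.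
    rewrite (filt_ext _ (fun n => andb (S (projT1 a) <=? n) (n <? m))) by (intro; apply Bool.andb_comm).
    rewrite <- filt_filt. apply filt_red_nil.
    rewrite (filt_red _ _ _ hdb), filt_conj.
    replace (S (projT1 a) <=? projT1 b) with false by (symmetry; apply Nat.leb_gt; lia).
    simpl. apply red_inv_r.
Qed.

End Free2.

Section Ord.
Variables (T : Type) (lt : T -> T -> Prop).
Hypothesis irr : forall i, ~ lt i i.
Hypothesis trans : forall i j k, lt i j -> lt j k -> lt i k.
Hypothesis total : forall i j, lt i j \/ i = j \/ lt j i.

Lemma SS_app (l1 l2 : list T) : StronglySorted lt l1 -> StronglySorted lt l2 ->
  (forall x y, In x l1 -> In y l2 -> lt x y) -> StronglySorted lt (l1 ++ l2).
Proof.
  induction l1 as [|a l1 IH]; simpl; auto. intros h1 h2 h3. inversion h1; subst.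
  constructor; auto. apply Forall_app; split; auto.
  apply Forall_forall. intros y hy. apply h3; auto.
Qed.

Lemma SS_In (a : T) l x : StronglySorted lt (a :: l) -> In x l -> lt a x.
Proof. intros h hx. inversion h; subst. rewrite Forall_forall in *. auto. Qed.
Arguments SS_In [a l x].

Lemma sorted_unique (l1 l2 : list T) : StronglySorted lt l1 -> StronglySorted lt l2 ->
  (forall i, In i l1 <-> In i l2) -> l1 = l2.
Proof.
  revert l2; induction l1 as [|a l1 IH]; intros l2 h1 h2 hi.
  - destruct l2 as [|b l2]; auto. exfalso. apply (proj2 (hi b)). left; auto.
  - destruct l2 as [|b l2]. { exfalso. apply (proj1 (hi a)). left; auto. }
    assert (eab : a = b).
    { destruct (proj1 (hi a) (or_introl eq_refl)) as [e|ha]; auto.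
      destruct (proj2 (hi b) (or_introl eq_refl)) as [e|hb]; auto.
      exfalso. apply (@irr a). eapply trans; [apply (SS_In h1 hb)|apply (SS_In h2 ha)]. }
    subst b. f_equal. inversion h1; inversion h2; subst. apply IH; auto.
    intro i. split; intro hx.
    + destruct (proj1 (hi i) (or_intror hx)) as [e|]; auto. subst. exfalso.
      apply (@irr i). apply (SS_In h1 hx).
    + destruct (proj2 (hi i) (or_intror hx)) as [e|]; auto. subst. exfalso.
      apply (@irr i). apply (SS_In h2 hx).
Qed.

Lemma sorted_insert (a : T) l : StronglySorted lt l -> ~ In a l ->
  exists l', StronglySorted lt l' /\ forall i, In i l' <-> i = a \/ In i l.
Proof.
  induction l as [|b l IH]; intros h hn.
  - exists [a]. split. { repeat constructor. } simpl. intuition.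
  - inversion h; subst.
    destruct (total a b) as [hab|[e|hba]].
    + exists (a :: b :: l). split.
      * constructor; auto. constructor; auto. apply Forall_forall. intros x hx.
        apply (trans hab). rewrite Forall_forall in *; auto.
      * simpl. intuition.
    + exfalso. apply hn. left; auto.
    + destruct IH as [l' [h1 h2]]; auto. { intro; apply hn; right; auto. }
      exists (b :: l'). split.
      * constructor; auto. apply Forall_forall. intros x hx. apply h2 in hx as [->|hx]; auto.
        rewrite Forall_forall in *; auto.
      * intro i. simpl. rewrite h2. intuition.
Qed.

Lemma sorted_exists (l : list T) (P : T -> Prop) : (forall i, P i -> In i l) ->
  exists l', StronglySorted lt l' /\ forall i, In i l' <-> P i.
Proof.
  revert P; induction l as [|a l IH]; intros P hP.
  - exists []. split; [constructor|]. intro i; split; [simpl; tauto|]. intro h; apply (hP i h).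
  - destruct (IH (fun i => P i /\ i <> a)) as [l' [h1 h2]].
    { intros i [hi hne]. destruct (hP i hi); auto. congruence. }
    destruct (classic (P a)) as [pa|pa].
    + destruct (sorted_insert a h1) as [l'' [h3 h4]]. { intro hin. apply h2 in hin. tauto. }
      exists l''. split; auto. intro i. rewrite h4, h2. split.
      * intros [->|[]]; auto.
      * intro hi. destruct (classic (i = a)); auto.
    + exists l'. split; auto. intro i. rewrite h2. split; [tauto|].
      intro hi; split; auto. intro; subst; contradiction.
Qed.
End Ord.

Lemma SS_map A B (R : B -> B -> Prop) (f : A -> B) (l : list A) :
  StronglySorted (fun x y => R (f x) (f y)) l -> StronglySorted R (map f l).
Proof.
  induction 1; simpl; constructor; auto. rewrite Forall_map. auto.
Qed.

Lemma SS_rev A (R : A -> A -> Prop) (l : list A) :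
  StronglySorted R l -> StronglySorted (fun x y => R y x) (rev l).
Proof.
  induction 1; simpl; [constructor|].
  apply (@SS_app _ (fun x y => R y x)); auto. { repeat constructor. }
  intros x y hx [<-|[]]. apply in_rev in hx. rewrite Forall_forall in *. auto.
Qed.

Lemma SS_filter A (R : A -> A -> Prop) (f : A -> bool) (l : list A) :
  StronglySorted R l -> StronglySorted R (filter f l).
Proof.
  induction 1; simpl; [constructor|]. destruct (f a); auto. constructor; auto.
  apply Forall_forall. intros x hx. apply filter_In in hx as [hx _].
  rewrite Forall_forall in *. auto.
Qed.

Lemma map_filter A B (f : A -> B) (q : B -> bool) (l : list A) :
  map f (filter (fun i => q (f i)) l) = filter q (map f l).
Proof. induction l; simpl; auto. destruct (q (f a)); simpl; f_equal; auto. Qed.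

Section Inf.
Variable G : nat -> group.
Notation L := (letter G).

Definition LW (x : iword G) m (u : list L) := exists l, restr x m l /\ map (wlet x) l = u.

Lemma restr_unique (x : iword G) m l1 l2 : restr x m l1 -> restr x m l2 -> l1 = l2.
Proof.
  intros [h1 h1'] [h2 h2']. apply (sorted_unique (@wlt_irr _ x) (@wlt_trans _ x)); auto.
  intro i. rewrite h1', h2'. tauto.
Qed.

Lemma LW_unique x m (u v : list L) : LW x m u -> LW x m v -> u = v.
Proof. intros [l1 [h1 <-]] [l2 [h2 <-]]. rewrite (restr_unique h1 h2). reflexivity. Qed.

Lemma cover_lt (x : iword G) m : exists l, forall i, projT1 (wlet x i) < m -> In i l.
Proof.
  induction m as [|m [l hl]].
  - exists []. intros; lia.
  - destruct (wfin x m) as [l' hl']. exists (l ++ l'). intros i hi.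
    apply in_or_app. destruct (Nat.eq_dec (projT1 (wlet x i)) m); [right|left]; auto.
    apply hl; lia.
Qed.

Lemma restr_exists (x : iword G) m : exists l, restr x m l.
Proof.
  destruct (cover_lt x m) as [l hl].
  destruct (@sorted_exists _ (@wlt _ x) (@wlt_trans _ x) (@wlt_total _ x) l (fun i => projT1 (wlet x i) < m) hl)
    as [l' [h1 h2]].
  exists l'. split; auto.
Qed.

Lemma LW_exists (x : iword G) m : exists u, LW x m u.
Proof. destruct (restr_exists x m) as [l hl]. exists (map (wlet x) l), l; auto. Qed.

Lemma LW_in x m (u : list L) a : LW x m u -> In a u -> exists i, a = wlet x i /\ projT1 (wlet x i) < m.
Proof.
  intros [l [[_ hl] <-]] ha. apply in_map_iff in ha as [i [<- hi]]. exists i. split; auto.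
  apply hl; auto.
Qed.
Arguments LW_in [x m u a].

Lemma LW_bounded x m (u : list L) : LW x m u -> bounded m u.
Proof.
  intro h. apply Forall_forall. intros a ha. destruct (LW_in h ha) as [i [-> hi]]. auto.
Qed.

Lemma LW_concat (a b : iword G) m ua ub : LW a m ua -> LW b m ub -> LW (concat a b) m (ua ++ ub).
Proof.
  intros [la [[s1 h1] <-]] [lb [[s2 h2] <-]].
  exists (map inl la ++ map inr lb). split.
  - split.
    + apply SS_app.
      * apply SS_map. simpl. exact s1.
      * apply SS_map. simpl. exact s2.
      * intros x y hx hy. apply in_map_iff in hx as [? [<- _]]. apply in_map_iff in hy as [? [<- _]].
        simpl. auto.
    + intros [i|i]; simpl; rewrite in_app_iff, !in_map_iff.
      * rewrite <- h1. split.
        -- intros [[j [e hj]]|[j [e hj]]]; [injection e; intros; subst; auto|discriminate].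
        -- intro hi; left; exists i; auto.
      * rewrite <- h2. split.
        -- intros [[j [e hj]]|[j [e hj]]]; [discriminate|injection e; intros; subst; auto].
        -- intro hi; right; exists i; auto.
  - rewrite map_app, !map_map. reflexivity.
Qed.

Lemma LW_inverse (a : iword G) m ua : LW a m ua -> LW (inverse a) m (inv ua).
Proof.
  intros [la [[s1 h1] <-]]. exists (rev la). split.
  - split.
    + apply SS_rev. exact s1.
    + intro i. rewrite <- in_rev. apply h1.
  - unfold inv. rewrite map_rev, map_map. reflexivity.
Qed.

Lemma LW_wpow (w : iword G) m u k : LW w m u -> LW (wpow w k) m (pow u k).
Proof. intro h. induction k; simpl; auto. apply LW_concat; auto. Qed.

Lemma LW_restrict (x : iword G) m m' u u' : m <= m' -> LW x m u -> LW x m' u' ->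
  u = filt (fun n => n <? m) u'.
Proof.
  intros hm hu [l' [[s' h'] <-]].
  apply (LW_unique hu). exists (filter (fun i => projT1 (wlet x i) <? m) l'). split.
  - split.
    + apply SS_filter; auto.
    + intro i. rewrite filter_In, h', Nat.ltb_lt. lia.
  - unfold filt. rewrite <- map_filter. reflexivity.
Qed.

Lemma word_eq_LW (a b : iword G) m u v : word_eq a b -> LW a m u -> LW b m v -> fp_eq m u v.
Proof. intros h [l1 [h1 <-]] [l2 [h2 <-]]. apply h; auto. Qed.

Lemma LW_word_eq (a b : iword G) : (forall m u v, LW a m u -> LW b m v -> fp_eq m u v) -> word_eq a b.
Proof. intros h m l1 l2 h1 h2. apply (h m); [exists l1|exists l2]; auto. Qed.

Definition Tr M (x : iword G) := forall m u, LW x m u -> red (filt (fun n => M <=? n) u) = [].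

Lemma filt_ge_nil M (u : list L) : (forall a, In a u -> projT1 a < M) -> filt (fun n => M <=? n) u = [].
Proof.
  induction u as [|a u IH]; intro h; auto. rewrite filt_cons.
  replace (M <=? projT1 a) with false. { simpl. apply IH. intros; apply h; right; auto. }
  symmetry. apply Nat.leb_gt. apply h; left; auto.
Qed.

Lemma Tr_mono M M' x : M <= M' -> Tr M x -> Tr M' x.
Proof.
  intros hm h m u hu.
  rewrite (filt_ext _ (fun n => andb (M <=? n) (M' <=? n))).
  - rewrite <- filt_filt. apply filt_red_nil. apply (h m u hu).
  - intro n. destruct (M' <=? n) eqn:E.
    + apply Nat.leb_le in E. rewrite (proj2 (Nat.leb_le M n)) by lia. reflexivity.
    + rewrite Bool.andb_false_r. reflexivity.
Qed.

Lemma Tr_finite x : is_finite_word x -> exists M, Tr M x.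
Proof.
  intros [l hl].
  assert (hb : exists M, forall i, In i l -> projT1 (wlet x i) < M).
  { clear hl. induction l as [|a l [M hM]]. { exists 0; simpl; tauto. }
    exists (S (max M (projT1 (wlet x a)))). intros i [<-|hi]; [lia|]. specialize (hM i hi); lia. }
  destruct hb as [M hM]. exists M. intros m u hu.
  rewrite filt_ge_nil; [reflexivity|]. intros a ha. destruct (LW_in hu ha) as [i [-> _]]. auto.
Qed.

Lemma ncl_Tr x : in_ncl x -> exists M, Tr M x.
Proof.
  induction 1 as [w hw|a b ha [Ma hA] hb [Mb hB]|a ha [Ma hA]|a u ha [Ma hA]|a b ha [Ma hA] hab].
  - apply Tr_finite; auto.
  - exists (max Ma Mb). intros m u hu.
    destruct (LW_exists a m) as [ua hua]. destruct (LW_exists b m) as [ub hub].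
    rewrite (LW_unique hu (LW_concat hua hub)), filt_app.
    rewrite red_nil_l.
    + eapply Tr_mono; [|exact hB|exact hub]. lia.
    + eapply Tr_mono; [|exact hA|exact hua]. lia.
  - exists Ma. intros m u hu. destruct (LW_exists a m) as [ua hua].
    rewrite (LW_unique hu (LW_inverse hua)), filt_inv. apply red_inv_nil. apply (hA m ua hua).
  - exists Ma. intros m v hv. destruct (LW_exists a m) as [ua hua]. destruct (LW_exists u m) as [uu huu].
    rewrite (LW_unique hv (LW_concat (LW_concat huu hua) (LW_inverse huu))).
    rewrite !filt_app, filt_inv, <- app_assoc. apply red_conj_nil. apply (hA m ua hua).
  - exists Ma. intros m v hv. destruct (LW_exists a m) as [ua hua].
    rewrite <- (fp_eq_red (filt_fp (fun n => Ma <=? n) (word_eq_LW hab hua hv))). apply (hA m ua hua).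
Qed.

End Inf.

Lemma SS_map_inv A B (R : B -> B -> Prop) (f : A -> B) (l : list A) :
  StronglySorted R (map f l) -> StronglySorted (fun x y => R (f x) (f y)) l.
Proof.
  induction l as [|a l IH]; simpl; intro h; [constructor|]. inversion h; subst.
  constructor; auto. rewrite Forall_map in *. auto.
Qed.

Section Sub.
Variable G : nat -> group.
Notation L := (letter G).
Variable w : iword G.
Variable P : wL w -> Prop.

Definition sT := {j : wL w | P j}.
Definition slt (x y : sT) := wlt w (proj1_sig x) (proj1_sig y).

Lemma sig_eq (x y : sT) : proj1_sig x = proj1_sig y -> x = y.
Proof.
  destruct x as [a p], y as [b q]; simpl. intros <-. f_equal. apply proof_irrelevance.
Qed.

Lemma slt_irr : forall i, ~ slt i i.
Proof. intros i. apply wlt_irr. Qed.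
Lemma slt_trans : forall i j k, slt i j -> slt j k -> slt i k.
Proof. intros i j k. apply wlt_trans. Qed.
Lemma slt_total : forall i j, slt i j \/ i = j \/ slt j i.
Proof.
  intros i j. destruct (@wlt_total _ w (proj1_sig i) (proj1_sig j)) as [h|[h|h]]; auto.
  right; left; apply sig_eq; auto.
Qed.
Lemma scount : exists f : sT -> nat, forall i j, f i = f j -> i = j.
Proof.
  destruct (wcount w) as [f hf]. exists (fun x => f (proj1_sig x)). intros i j e.
  apply sig_eq, hf, e.
Qed.
Lemma snontriv : forall i : sT,
  projT2 (wlet w (proj1_sig i)) <> gone (G (projT1 (wlet w (proj1_sig i)))).
Proof. intro i. apply wnontriv. Qed.

Lemma lift_list (l : list (wL w)) : exists Ls : list sT, forall x : sT, In (proj1_sig x) l -> In x Ls.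
Proof.
  induction l as [|a l [Ls hL]]. { exists []. simpl; tauto. }
  destruct (classic (P a)) as [pa|pa].
  - exists (exist _ a pa :: Ls). intros x [e|hx]; [left|right; auto]. apply sig_eq; auto.
  - exists Ls. intros x [e|hx]; auto. exfalso. destruct x as [b q]; simpl in e. subst; contradiction.
Qed.

Lemma sfin : forall n, exists l : list sT, forall i, projT1 (wlet w (proj1_sig i)) = n -> In i l.
Proof.
  intro n. destruct (wfin w n) as [l hl]. destruct (lift_list l) as [Ls hL]. exists Ls.
  intros i hi. apply hL, hl, hi.
Qed.

Definition subw : iword G :=
  @IWord G sT slt slt_irr slt_trans slt_total scount (fun x => wlet w (proj1_sig x)) snontriv sfin.

Lemma lift_exact (l : list (wL w)) : (forall i, In i l -> P i) ->
  exists Ls : list sT, map (@proj1_sig _ _) Ls = l.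
Proof.
  induction l as [|a l IH]; intro h. { exists []; auto. }
  destruct IH as [Ls hL]. { intros; apply h; right; auto. }
  exists (exist _ a (h a (or_introl eq_refl)) :: Ls). simpl. f_equal; auto.
Qed.

Lemma LW_subw m (l0 : list (wL w)) : StronglySorted (wlt w) l0 ->
  (forall i, In i l0 <-> P i /\ projT1 (wlet w i) < m) -> LW subw m (map (wlet w) l0).
Proof.
  intros hs hi. destruct (lift_exact l0) as [Ls hL]. { intros i h; apply hi, h. }
  exists Ls. split; [split|].
  - subst l0. apply SS_map_inv in hs. exact hs.
  - intro x. simpl. split.
    + intro hx. apply (in_map (@proj1_sig _ _)) in hx. rewrite hL in hx. apply hi, hx.
    + intro hx. assert (h2 : In (proj1_sig x) l0) by (apply hi; split; auto; apply proj2_sig).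
      rewrite <- hL in h2. apply in_map_iff in h2 as [y [e hy]].
      rewrite <- (sig_eq _ _ e). exact hy.
  - simpl. rewrite <- hL, map_map. reflexivity.
Qed.

End Sub.

Section D.
Variable G : nat -> group.
Notation L := (letter G).

Lemma e_irr : forall i : Empty_set, ~ (fun _ _ : Empty_set => False) i i.
Proof. intros []. Qed.
Lemma e_trans : forall i j k : Empty_set, False -> False -> False.
Proof. intros []. Qed.
Lemma e_total : forall i j : Empty_set, False \/ i = j \/ False.
Proof. intros []. Qed.
Lemma e_count : exists f : Empty_set -> nat, forall i j, f i = f j -> i = j.
Proof. exists (fun _ => 0). intros []. Qed.
Definition e_let (i : Empty_set) : L := match i with end.
Lemma e_nontriv : forall i, projT2 (e_let i) <> gone (G (projT1 (e_let i))).
Proof. intros []. Qed.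
Lemma e_fin : forall n, exists l : list Empty_set, forall i, projT1 (e_let i) = n -> In i l.
Proof. intro n. exists []. intros []. Qed.

Definition empty_w : iword G :=
  @IWord G Empty_set (fun _ _ => False) e_irr e_trans e_total e_count e_let e_nontriv e_fin.

Lemma LW_empty m u : LW empty_w m u -> u = [].
Proof. intros [l [_ <-]]. destruct l as [|[] l]; reflexivity. Qed.

Lemma empty_ncl : in_ncl empty_w.
Proof. apply ncl_fin. exists []. intros []. Qed.

Lemma filt_ge_all M (u : list L) : (forall a, In a u -> M <= projT1 a) -> filt (fun n => M <=? n) u = u.
Proof.
  induction u as [|a u IH]; intro h; auto. rewrite filt_cons.
  replace (M <=? projT1 a) with true. { simpl. f_equal. apply IH. intros; apply h; right; auto. }
  symmetry. apply Nat.leb_le. apply h; left; auto.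
Qed.

Lemma base_case M (w : iword G) : LW w M [] -> Tr M w -> in_ncl w.
Proof.
  intros h0 hT.
  assert (hge : forall i, M <= projT1 (wlet w i)).
  { intro i. destruct (Nat.le_gt_cases M (projT1 (wlet w i))) as [h|h]; auto. exfalso.
    destruct h0 as [l [[_ hl] e]]. apply hl in h. destruct l; [contradiction|discriminate]. }
  apply (ncl_eq empty_ncl). apply LW_word_eq. intros m u v hu hv.
  rewrite (LW_empty hu). apply red_fp_eq; [constructor|eapply LW_bounded; eauto|].
  symmetry. rewrite <- (@filt_ge_all M v). { apply (hT m v hv). }
  intros a ha. destruct (@LW_in _ _ _ _ _ hv ha) as [i [-> _]]. auto.
Qed.

Lemma enum_exists (w : iword G) (Q : wL w -> Prop) m :
  exists l, StronglySorted (wlt w) l /\ forall j, In j l <-> Q j /\ projT1 (wlet w j) < m.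
Proof.
  destruct (cover_lt w m) as [l hl].
  apply (@sorted_exists _ (wlt w) (@wlt_trans _ w) (@wlt_total _ w) l).
  intros j [_ h]. apply hl, h.
Qed.

Lemma step_case N M (w : iword G) (i : wL w) l' :
  (forall w' : iword G, (exists u, LW w' M u /\ length u <= N) -> Tr M w' -> in_ncl w') ->
  restr w M (i :: l') -> (exists u, LW w M u /\ length u <= S N) -> Tr M w -> in_ncl w.
Proof.
  intros IH hr [u0 [hu0 hlen]] hT.
  set (u := @subw G w (fun j => wlt w j i)).
  set (a := @subw G w (fun j => j = i)).
  set (v := @subw G w (fun j => wlt w i j)).
  assert (hi : projT1 (wlet w i) < M) by (apply (proj2 hr); left; auto).
  assert (F1 : forall m, exists U A V, LW u m U /\ LW a m A /\ LW v m V /\ LW w m (U ++ A ++ V)).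
  { intro m.
    destruct (enum_exists w (fun j => wlt w j i) m) as [lu [su hu]].
    destruct (enum_exists w (fun j => j = i) m) as [la [sa ha]].
    destruct (enum_exists w (fun j => wlt w i j) m) as [lv [sv hv]].
    exists (map (wlet w) lu), (map (wlet w) la), (map (wlet w) lv).
    split; [apply LW_subw; auto|]. split; [apply LW_subw; auto|]. split; [apply LW_subw; auto|].
    exists (lu ++ la ++ lv). split; [|rewrite !map_app; reflexivity]. split.
    - apply SS_app; [auto|apply SS_app; auto|].
      + intros x y hx hy. apply ha in hx as [-> _]. apply hv in hy as [hy _]. auto.
      + intros x y hx hy. apply hu in hx as [hx _]. apply in_app_iff in hy as [hy|hy].
        * apply ha in hy as [-> _]. auto.
        * apply hv in hy as [hy _]. eapply wlt_trans; eauto.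
    - intro j. rewrite !in_app_iff, hu, ha, hv. split.
      + intros [[_ h]|[[_ h]|[_ h]]]; auto.
      + intro h. destruct (@wlt_total _ w j i) as [h1|[h1|h1]]; tauto. }
  assert (F2 : forall m A, LW a m A -> filt (fun n => M <=? n) A = []).
  { intros m A hA. apply filt_ge_nil. intros b hb. destruct (@LW_in _ _ _ _ _ hA hb) as [x [-> _]].
    simpl. rewrite (proj2_sig x). exact hi. }
  set (w' := concat u v).
  assert (hw' : in_ncl w').
  { apply IH.
    - destruct (F1 M) as [U [A [V [hU [hA [hV hW]]]]]].
      exists (U ++ V). split; [apply LW_concat; auto|].
      assert (eA : A = [wlet w i]).
      { apply (LW_unique hA). apply (@LW_subw G w (fun j => j = i) M [i]).
        - repeat constructor.
        - intro j. simpl. split; [intros [<-|[]]; auto|intros [-> _]; auto]. }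
      rewrite (LW_unique hu0 hW), eA in hlen. rewrite !length_app in *. simpl in hlen. lia.
    - intros m X hX. destruct (F1 m) as [U [A [V [hU [hA [hV hW]]]]]].
      rewrite (LW_unique hX (LW_concat hU hV)).
      pose proof (hT m _ hW) as h. rewrite !filt_app, (F2 m A hA) in h. rewrite filt_app. exact h. }
  assert (hfa : is_finite_word a).
  { exists [exist (fun j => j = i) i eq_refl]. intro x. left. apply sig_eq. simpl. symmetry. apply (proj2_sig x). }
  assert (hz : in_ncl (concat (concat (concat u a) (inverse u)) w')).
  { apply ncl_mul; auto. apply ncl_conj. apply ncl_fin. exact hfa. }
  apply (ncl_eq hz). apply LW_word_eq. intros m X Y hX hY.
  destruct (F1 m) as [U [A [V [hU [hA [hV hW]]]]]].
  rewrite (LW_unique hX (LW_concat (LW_concat (LW_concat hU hA) (LW_inverse hU)) (LW_concat hU hV))).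
  rewrite (LW_unique hY hW).
  apply red_fp_eq.
  - apply (LW_bounded (LW_concat (LW_concat (LW_concat hU hA) (LW_inverse hU)) (LW_concat hU hV))).
  - apply (LW_bounded hW).
  - replace (((U ++ A) ++ inv U) ++ U ++ V) with ((U ++ A) ++ inv U ++ U ++ V) by (rewrite <- !app_assoc; reflexivity).
    rewrite red_cancel, <- app_assoc. reflexivity.
Qed.

Lemma Tr_ncl M N : forall w : iword G, (exists u, LW w M u /\ length u <= N) -> Tr M w -> in_ncl w.
Proof.
  induction N as [|N IH]; intros w hu hT.
  - destruct hu as [u [hu hl]]. destruct u; [|simpl in hl; lia]. apply (base_case hu hT).
  - destruct (restr_exists w M) as [l hl]. destruct l as [|i l'].
    + apply (base_case (M:=M)); auto. exists []; auto.
    + exact (step_case IH hl hu hT).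
Qed.

End D.

Theorem proposition8 (G : nat -> group) (w : iword G) (k : nat) :
  in_ncl (wpow w k) -> in_ncl w.
Proof.
  intro h. destruct (ncl_Tr h) as [M hM].
  destruct (@stable G k (fun m u' => exists u, LW w m u /\ u' = filt (fun n => M <=? n) u)) as [M' hM'].
  - intro m. destruct (LW_exists w m) as [u hu]. eauto.
  - intros m u' [u [hu ->]]. rewrite <- filt_pow. apply (hM m). apply LW_wpow; auto.
  - intros m m' u1 u2 hm [x1 [h1 ->]] [x2 [h2 ->]].
    rewrite (LW_restrict hm h1 h2). rewrite !filt_filt. apply filt_ext. intro n. apply Bool.andb_comm.
  - assert (hT : Tr (max M M') w).
    { intros m u hu.
      rewrite (filt_ext _ (fun n => andb (andb (M <=? n) (M' <=? n)) (max M M' <=? n))).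
      - rewrite <- !filt_filt. apply filt_red_nil. apply (hM' m). eauto.
      - intro n. destruct (max M M' <=? n) eqn:E.
        + apply Nat.leb_le in E. rewrite (proj2 (Nat.leb_le M n)), (proj2 (Nat.leb_le M' n)) by lia. reflexivity.
        + rewrite Bool.andb_false_r. reflexivity. }
    destruct (LW_exists w (max M M')) as [u hu].
    apply (@Tr_ncl G (max M M') (length u) w); eauto.
Qed.
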